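(* Let $\mathfrak{g}$ be a finite-dimensional Lie algebra over a field $K$ of characteristic zero, and let $(A,\cdot)$ be a CPA-structure on $\mathfrak{g}$. Then there exists an ideal $I_\infty$ such that (1) $I_\infty^{[k]}\subseteq \mathrm{Ann}_A\subseteq I_\infty$ for all $k$ large enough, and (2) the induced CPA-structure on $\mathfrak{g}/I_\infty$ is nondegenerate.
   Context: A CPA-structure on a Lie algebra $\mathfrak{g}$ is a bilinear product $x\cdot y$ on the underlying space $A$ of $\mathfrak{g}$ satisfying, for all $x,y,z$: $x\cdot y=y\cdot x$; $[x,y]\cdot z=x\cdot(y\cdot z)-y\cdot(x\cdot z)$; $x\cdot[y,z]=[x\cdot y,z]+[y,x\cdot z]$. Let $L(x)(y)=x\cdot y$. The annihilator is $\mathrm{Ann}_A=\ker L=\{x\mid L(x)=0\}$; the structure is nondegenerate if $\mathrm{Ann}_A=0$. An ideal is a subspace $I$ that is both a Lie ideal ($[\mathfrak{g},I]\subseteq I$) and an algebra ideal ($A\cdot I\subseteq I$). For an ideal $I$, $I^{[n]}=[I,[I,[\cdots,[I,I]\cdots]]]$ with $n$ factors $I$. *)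

(* Defs.v *)
From HB Require Import structures.
From mathcomp Require Import all_boot all_order all_algebra.
Set Implicit Arguments. Unset Strict Implicit. Unset Printing Implicit Defensive.
Import GRing.Theory.
Local Open Scope ring_scope.

Definition bilinear_op (K : fieldType) (V : vectType K) (f : V -> V -> V) : Prop :=
  (forall (a : K) (x y z : V), f (a *: x + y) z = a *: f x z + f y z) /\
  (forall (a : K) (x y z : V), f x (a *: y + z) = a *: f x y + f x z).

Definition is_lie_bracket (K : fieldType) (V : vectType K) (br : V -> V -> V) : Prop :=
  [/\ bilinear_op br,
      (forall x, br x x = 0) &
      (forall x y z, br x (br y z) + br y (br z x) + br z (br x y) = 0)].

Definition is_CPA (K : fieldType) (V : vectType K) (br p : V -> V -> V) : Prop :=
  [/\ bilinear_op p,
      (forall x y, p x y = p y x),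
      (forall x y z, p (br x y) z = p x (p y z) - p y (p x z)) &
      (forall x y z, p x (br y z) = br (p x y) z + br y (p x z))].

Definition ann (K : fieldType) (V : vectType K) (p : V -> V -> V) (x : V) : Prop :=
  forall y, p x y = 0.

Definition is_ideal (K : fieldType) (V : vectType K) (br p : V -> V -> V)
    (I : {vspace V}) : Prop :=
  (forall x y, y \in I -> br x y \in I) /\ (forall x y, y \in I -> p x y \in I).

(* The subspace [U, W] spanned by all brackets [u, w], u in U, w in W
   (spanned by brackets of basis vectors, using bilinearity). *)
Definition bracket_space (K : fieldType) (V : vectType K) (br : V -> V -> V)
    (U W : {vspace V}) : {vspace V} :=
  <<[seq br u w | u <- vbasis U, w <- vbasis W]>>%VS.

(* lie_pow_aux I n = [I,[I,...,[I,I]...]] with n.+1 factors. *)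
Fixpoint lie_pow_aux (K : fieldType) (V : vectType K) (br : V -> V -> V)
    (I : {vspace V}) (n : nat) : {vspace V} :=
  match n with
  | 0 => I
  | n'.+1 => bracket_space br I (lie_pow_aux br I n')
  end.

(* I^{[n]} with n factors (meaningful for n >= 1). *)
Definition lie_pow (K : fieldType) (V : vectType K) (br : V -> V -> V)
    (I : {vspace V}) (n : nat) : {vspace V} := lie_pow_aux br I n.-1.

(* Main.v *)
Require Import Defs.
From HB Require Import structures.
From mathcomp Require Import all_boot all_order all_algebra.
From mathcomp Require Import zify.
Import GRing.Theory.
Set Implicit Arguments. Unset Strict Implicit.
Local Open Scope ring_scope.

Definition pl1 (K : fieldType) (V : vectType K) (p : V -> V -> V) (e : V) : V -> V :=
  fun x => p x e.
Lemma pl1_lin (K : fieldType) (V : vectType K) (p : V -> V -> V) (Hp : bilinear_op p) e :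
  linear_for *:%R (pl1 p e).
Proof. by move=> a u v; rewrite /pl1 Hp.1. Qed.
Definition pl1L (K : fieldType) (V : vectType K) (p : V -> V -> V) (Hp : bilinear_op p) e
  : {linear V -> V} :=
  HB.pack (pl1 p e) (GRing.isLinear.Build K V V *:%R (pl1 p e) (pl1_lin Hp e)).
Lemma pl1LE (K : fieldType) (V : vectType K) (p : V -> V -> V) (Hp : bilinear_op p) e x :
  linfun (pl1L Hp e) x = p x e.
Proof. by rewrite lfunE. Qed.

Definition pl2 (K : fieldType) (V : vectType K) (p : V -> V -> V) (e : V) : V -> V :=
  fun x => p e x.
Lemma pl2_lin (K : fieldType) (V : vectType K) (p : V -> V -> V) (Hp : bilinear_op p) e :
  linear_for *:%R (pl2 p e).
Proof. by move=> a u v; rewrite /pl2 Hp.2. Qed.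
Definition pl2L (K : fieldType) (V : vectType K) (p : V -> V -> V) (Hp : bilinear_op p) e
  : {linear V -> V} :=
  HB.pack (pl2 p e) (GRing.isLinear.Build K V V *:%R (pl2 p e) (pl2_lin Hp e)).

Lemma p_x0 (K : fieldType) (V : vectType K) (p : V -> V -> V) (Hp : bilinear_op p) x :
  p x 0 = 0.
Proof. have -> : p x 0 = pl2L Hp x 0 by []. exact: linear0. Qed.
Lemma p_0x (K : fieldType) (V : vectType K) (p : V -> V -> V) (Hp : bilinear_op p) x :
  p 0 x = 0.
Proof. have -> : p 0 x = pl1L Hp x 0 by []. exact: linear0. Qed.

Definition stepS (K : fieldType) (V : vectType K) (p : V -> V -> V) (Hp : bilinear_op p)
  (W : {vspace V}) : {vspace V} :=
  (\bigcap_(i < \dim (fullv : {vspace V}))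
      (linfun (pl1L Hp (vbasis fullv)`_i) @^-1: W))%VS.

Lemma mem_stepS (K : fieldType) (V : vectType K) (p : V -> V -> V) (Hp : bilinear_op p)
  (W : {vspace V}) x : x \in stepS Hp W <-> forall y, p x y \in W.
Proof.
split.
  move=> Hx y.
  have -> : p x y = pl2L Hp x y by [].
  rewrite (coord_vbasis (memvf y)) linear_sum.
  apply: rpred_sum => i _; rewrite linearZ rpredZ //.
  have : x \in (linfun (pl1L Hp (vbasis fullv)`_i) @^-1: W)%VS.
    rewrite memvE; apply: subv_trans (_ : stepS Hp W <= _)%VS.
      by rewrite -memvE.
    by apply: (bigcapv_inf i).
  by rewrite -memv_preim pl1LE.
move=> H; rewrite memvE; apply/subv_bigcapP => i _.
by rewrite -memvE -memv_preim pl1LE.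
Qed.

Definition Jc (K : fieldType) (V : vectType K) (p : V -> V -> V) (Hp : bilinear_op p)
  (n : nat) : {vspace V} := iter n (stepS Hp) 0%VS.

Theorem proposition2p6 (K : fieldType) (V : vectType K) (br p : V -> V -> V) :
  [pchar K] =i pred0 ->
  is_lie_bracket br ->
  is_CPA br p ->
  exists I : {vspace V},
    [/\ is_ideal br p I,
        (exists N : nat, forall k : nat, (N <= k)%N ->
            (forall x, x \in lie_pow br I k -> ann p x)),
        (forall x, ann p x -> x \in I) &
        (forall x, (forall y, p x y \in I) -> x \in I)].
Proof.
move=> _ [Hb _ _] [Hp Hsym H2 _].
pose J := Jc Hp.
have JS n : J n.+1 = stepS Hp (J n) by [].
have J_alg n x y : y \in J n -> p x y \in J n.
  elim: n x y => [|n IH] x y.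
    by rewrite /J /Jc /= memv0 => /eqP ->; rewrite p_x0 // rpred0.
  rewrite JS !mem_stepS => Hy z.
  by rewrite Hsym (Hsym x y); apply: IH.
have J_lie n x y : y \in J n -> br x y \in J n.
  elim: n x y => [|n IH] x y.
    by rewrite /J /Jc /= memv0 => /eqP ->; rewrite p_x0 // rpred0.
  rewrite JS !mem_stepS => Hy z.
  rewrite H2 rpredB //; by apply: J_alg.
have J_sub n x : x \in J n -> x \in J n.+1.
  by move=> Hx; rewrite JS mem_stepS => z; rewrite Hsym; apply: J_alg.
have J_mono m n : (m <= n)%N -> (J m <= J n)%VS.
  move=> /subnK <-; elim: (n - m)%N => [|k IH]; first by rewrite add0n subvv.
  rewrite addSn; apply: subv_trans IH _; apply/subvP => x; exact: J_sub.
have [N HN] : exists N, J N = J N.+1.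
  set d := \dim (fullv : {vspace V}).
  case: (boolP [exists i : 'I_d.+1, J i == J i.+1]).
    by move=> /existsP [i /eqP Hi]; exists i.
  move=> Hne; exfalso.
  have Hd i : (i <= d.+1)%N -> (i <= \dim (J i))%N.
    elim: i => [|i IH] Hi //.
    have Hi' : (i < d.+1)%N by [].
    have := IH (ltnW Hi).
    have : J (Ordinal Hi') != J (Ordinal Hi').+1.
      by apply: contraNN Hne => E; apply/existsP; exists (Ordinal Hi').
    rewrite eqEdim (J_mono i i.+1) // -ltnNge => lt1 le1.
    exact: leq_ltn_trans le1 lt1.
  have := Hd d.+1 (leqnn _).
  have := dimvS (subvf (J d.+1)); rewrite -/d => h1 h2.
  by have := leq_trans h2 h1; rewrite ltnn.
pose Jt j := if (j <= N)%N then J j else fullv.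
pose P x d := forall j y, y \in Jt (j + d)%N -> p x y \in Jt j.
have Pbase x : x \in J N -> P x 1%N.
  move=> Hx j y; rewrite /Jt.
  case: (leqP (j + 1) N) => h.
    have -> : (j <= N)%N by lia.
    rewrite addn1 JS mem_stepS => Hy; rewrite Hsym; exact: Hy.
  move=> _.
  have Hx' : x \in J N.+1 by rewrite -HN.
  have Hxy : p x y \in J N by move: Hx'; rewrite JS mem_stepS; apply.
  case: ifP => hj; last by rewrite memvf.
  by have -> : j = N by lia.
have Pbr a b d : P a 1%N -> P b d -> P (br a b) d.+1.
  move=> Ha Hb' j y Hy; rewrite H2 rpredB //.
    apply: Ha; apply: Hb'; by rewrite (_ : (j + 1 + d = j + d.+1)%N) //; lia.
  apply: Hb'; apply: Ha; by rewrite (_ : (j + d + 1 = j + d.+1)%N) //; lia.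
have Plin d a x z : P x d -> P z d -> P (a *: x + z) d.
  move=> Hx Hz j y Hy; rewrite Hp.1 rpredD ?rpredZ //; [apply: Hx | apply: Hz]; exact: Hy.
have P0 d : P 0 d by move=> j y _; rewrite p_0x // rpred0.
have Pspan d (X : seq V) x : (forall u, u \in X -> P u d) -> x \in <<X>>%VS -> P x d.
  move=> HX Hx; rewrite (coord_span (X := in_tuple X) Hx).
  apply: (big_ind (fun v => P v d)) => //.
    by move=> u v Hu Hv; rewrite -[u]scale1r; apply: Plin.
  move=> i _; rewrite -[_ *: _]addr0; apply: Plin => //; apply: HX.
  by apply: mem_nth; exact: (ltn_ord i).
have Ppow m x : x \in lie_pow_aux br (J N) m -> P x m.+1.
  elim: m x => [|m IH] x; first exact: Pbase.
  move=> /= Hx; apply: Pspan Hx => z /allpairsP [[u w] [/= Hu Hw ->]].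
  apply: Pbr; [apply: Pbase | apply: IH]; exact: vbasis_mem.
exists (J N); split.
- by split; [apply: J_lie | apply: J_alg].
- exists N.+1 => k Hk x Hx y.
  have Hk0 : (0 < k)%N by lia.
  have := Ppow _ _ Hx; rewrite prednK // => HP.
  have : p x y \in Jt 0%N.
    apply: HP; rewrite /Jt add0n; case: ifP => h; last exact: memvf.
    lia.
  by rewrite /Jt /= /J /Jc /= memv0 => /eqP.
- move=> x Hx; rewrite HN; apply: (subvP (J_mono 1%N N.+1 isT)).
  by rewrite JS mem_stepS => y; rewrite Hx /J /Jc /= rpred0.
- by move=> x Hx; rewrite HN JS mem_stepS.
Qed.
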